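(* $(\overline{\mathcal{D}},\overline{\delta},\overline{\varepsilon})$ is a comonad on $\mathsf{CLAC}$.
   Context: Composition in diagrammatic order. A Cartesian left additive category: category with finite products, hom-sets commutative monoids with $f(g+h)=fg+fh$, $f0=0$, projections additive. $\mathsf{CLAC}$: Cartesian left additive categories and functors preserving finite products strictly ($\mathsf{F}(A\times B)=\mathsf{F}A\times\mathsf{F}B$, terminal object, $\mathsf{F}(\pi_j)=\pi_j$) and $+$, $0$. Let $\mathsf{P}(A)=A\times A$, $\mathsf{P}(f)=f\times f$. A pre-$\mathsf{D}$-sequence $f_\bullet:A\to B$ is $(f_n)_{n\ge0}$ with $f_n:\mathsf{P}^n(A)\to B$. $\mathsf{T}(f_\bullet)_n=\langle\mathsf{P}^n(\pi_0)f_n,f_{n+1}\rangle$ (a sequence $\mathsf{P}(A)\to\mathsf{P}(B)$); $\mathsf{D}[f_\bullet]_n=f_{n+1}$. $\overline{\mathcal{D}}[\mathbb{X}]$: objects of $\mathbb{X}$, pre-$\mathsf{D}$-sequences, identity $i_0=1$, $i_n=\pi_1\cdots\pi_1$, composition $(f_\bullet\ast g_\bullet)_n=\mathsf{T}^n(f_\bullet)_0g_n$, finite products (projections $i_\bullet\cdot\pi_j$, $(i_\bullet\cdot\pi_j)_n=i_n\pi_j$; pairing $\langle f_n,g_n\rangle$; terminal object of $\mathbb{X}$), addition $0_n=0$, $(f_\bullet+g_\bullet)_n=f_n+g_n$. $\overline{\mathcal{D}}[\mathsf{F}](f_\bullet)_n=\mathsf{F}(f_n)$. $\overline{\varepsilon}(f_\bullet)=f_0$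 (identity on objects). $\overline{\delta}(f_\bullet)$ is the sequence of $\overline{\mathcal{D}}[\mathbb{X}]$ with $0$-th term $f_\bullet$ and $n$-th term $\mathsf{D}^n[f_\bullet]$ (identity on objects). *)

(* Defs.v *)
(* Composition is written in DIAGRAMMATIC order: comp f g = "f then g" = fg. *)
From Stdlib Require Import Init.Logic.

Record clac : Type := Clac {
  ob   : Type;
  hom  : ob -> ob -> Type;
  idm  : forall A, hom A A;
  comp : forall A B C, hom A B -> hom B C -> hom A C;
  prod : ob -> ob -> ob;
  term : ob;
  pi0  : forall A B, hom (prod A B) A;
  pi1  : forall A B, hom (prod A B) B;
  pair : forall C A B, hom C A -> hom C B -> hom C (prod A B);
  bang : forall A, hom A term;
  add  : forall A B, hom A B -> hom A B -> hom A B;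
  zero : forall A B, hom A B }.

Arguments hom {c} _ _.
Arguments idm {c} A.
Arguments comp {c A B C} f g.
Arguments prod {c} A B.
Arguments term {c}.
Arguments pi0 {c} A B.
Arguments pi1 {c} A B.
Arguments pair {c C A B} f g.
Arguments bang {c} A.
Arguments add {c A B} f g.
Arguments zero {c} A B.

Record is_clac (X : clac) : Prop := {
  c_idl : forall A B (f : @hom X A B), comp (@idm X A) f = f;
  c_idr : forall A B (f : @hom X A B), comp f (@idm X B) = f;
  c_assoc : forall A B C D (f : @hom X A B) (g : @hom X B C) (h : @hom X C D),
      comp (comp f g) h = comp f (comp g h);
  c_pair0 : forall C A B (f : @hom X C A) (g : @hom X C B), comp (pair f g) (pi0 A B) = f;
  c_pair1 : forall C A B (f : @hom X C A) (g : @hom X C B), comp (pair f g) (pi1 A B) = g;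
  c_pair_uniq : forall C A B (h : @hom X C (@prod X A B)),
      pair (comp h (pi0 A B)) (comp h (pi1 A B)) = h;
  c_term_uniq : forall A (f : @hom X A (@term X)), f = bang A;
  c_addA : forall A B (f g h : @hom X A B), add f (add g h) = add (add f g) h;
  c_addC : forall A B (f g : @hom X A B), add f g = add g f;
  c_add0 : forall A B (f : @hom X A B), add (zero A B) f = f;
  c_compD : forall A B C (f : @hom X A B) (g h : @hom X B C),
      comp f (add g h) = add (comp f g) (comp f h);
  c_comp0 : forall A B C (f : @hom X A B), comp f (@zero X B C) = zero A C;
  c_pi0D : forall C A B (f g : @hom X C (@prod X A B)),
      comp (add f g) (pi0 A B) = add (comp f (pi0 A B)) (comp g (pi0 A B));
  c_pi1D : forall C A B (f g : @hom X C (@prod X A B)),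
      comp (add f g) (pi1 A B) = add (comp f (pi1 A B)) (comp g (pi1 A B));
  c_pi00 : forall C A B, comp (zero C (@prod X A B)) (pi0 A B) = zero C A;
  c_pi10 : forall C A B, comp (zero C (@prod X A B)) (pi1 A B) = zero C B }.

Record functor (X Y : clac) : Type := Functor {
  fob  : ob X -> ob Y;
  fhom : forall A B, @hom X A B -> @hom Y (fob A) (fob B);
  fprod : forall A B, fob (prod A B) = prod (fob A) (fob B) }.

Arguments Functor {X Y} fob fhom fprod.
Arguments fob {X Y} f A.
Arguments fhom {X Y} f {A B} g.
Arguments fprod {X Y} f A B.

Definition cast_src {X : clac} {A A' B : ob X} (e : A = A') (f : hom A B) : hom A' B :=
  eq_rect A (fun Z => hom Z B) f A' e.
Definition cast2 {X : clac} {A A' B B' : ob X} (e1 : A = A') (e2 : B = B')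
  (f : hom A B) : hom A' B' :=
  eq_rect B (fun Z => hom A' Z) (eq_rect A (fun Z => hom Z B) f A' e1) B' e2.

Record is_clac_functor {X Y : clac} (F : functor X Y) : Prop := {
  f_id : forall A, fhom F (idm A) = idm (fob F A);
  f_comp : forall A B C (f : hom A B) (g : hom B C),
      fhom F (comp f g) = comp (fhom F f) (fhom F g);
  f_term : fob F term = term;
  f_pi0 : forall A B, cast_src (fprod F A B) (fhom F (pi0 A B)) = pi0 (fob F A) (fob F B);
  f_pi1 : forall A B, cast_src (fprod F A B) (fhom F (pi1 A B)) = pi1 (fob F A) (fob F B);
  f_add : forall A B (f g : hom A B), fhom F (add f g) = add (fhom F f) (fhom F g);
  f_zero : forall A B, fhom F (zero A B) = zero (fob F A) (fob F B) }.

Definition fid (X : clac) : functor X X :=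
  Functor (fun A => A) (fun A B f => f) (fun A B => eq_refl).

Definition fcomp {X Y Z : clac} (F : functor X Y) (G : functor Y Z) : functor X Z :=
  Functor (fun A => fob G (fob F A)) (fun A B f => fhom G (fhom F f))
    (fun A B => eq_trans (f_equal (fob G) (fprod F A B)) (fprod G (fob F A) (fob F B))).

Definition fun_eq {X Y : clac} (F G : functor X Y) : Prop :=
  exists eo : forall A, fob F A = fob G A,
    forall A B (f : hom A B), cast2 (eo A) (eo B) (fhom F f) = fhom G f.

Section Dbar.
Variable X : clac.

Definition P (A : ob X) : ob X := prod A A.
Definition pmap {A B : ob X} (f : hom A B) : hom (P A) (P B) :=
  pair (comp (pi0 A A) f) (comp (pi1 A A) f).

Fixpoint Pn (n : nat) (A : ob X) : ob X :=
  match n with O => A | S m => Pn m (P A) end.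

Fixpoint Pmap (n : nat) {A B : ob X} (f : hom A B) : hom (Pn n A) (Pn n B) :=
  match n with O => f | S m => Pmap m (pmap f) end.

Definition dseq (A B : ob X) : Type := forall n : nat, hom (Pn n A) B.

Definition Tseq {A B : ob X} (f : dseq A B) : dseq (P A) (P B) :=
  fun n => pair (comp (Pmap n (pi0 A A)) (f n)) (f (S n)).

Fixpoint Tn (k : nat) {A B : ob X} (f : dseq A B) : dseq (Pn k A) (Pn k B) :=
  match k with O => f | S m => Tn m (Tseq f) end.

Definition Dseq {A B : ob X} (f : dseq A B) : dseq (P A) B := fun n => f (S n).

Fixpoint Dn (k : nat) {A B : ob X} (f : dseq A B) : dseq (Pn k A) B :=
  match k with O => f | S m => Dn m (Dseq f) end.

Fixpoint pi1s (n : nat) (A : ob X) : hom (Pn (S n) A) A :=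
  match n with
  | O => pi1 A A
  | S m => comp (pi1s m (P A)) (pi1 A A)
  end.

Definition idn (A : ob X) : dseq A A :=
  fun n => match n with O => idm A | S m => pi1s m A end.

Definition dcomp {A B C : ob X} (f : dseq A B) (g : dseq B C) : dseq A C :=
  fun n => comp (Tn n f 0) (g n).

End Dbar.

Arguments P {X} A.
Arguments Pn {X} n A.
Arguments Pmap {X} n {A B} f.
Arguments Tn {X} k {A B} f _.
Arguments Dn {X} k {A B} f _.

Definition Dbar (X : clac) : clac :=
  Clac (ob X) (dseq X) (idn X) (fun A B C f g => dcomp X f g)
    (@prod X) (@term X)
    (fun A B n => comp (idn X (prod A B) n) (pi0 A B))
    (fun A B n => comp (idn X (prod A B) n) (pi1 A B))
    (fun C A B f g n => pair (f n) (g n))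
    (fun A n => bang (Pn n A))
    (fun A B f g n => add (f n) (g n))
    (fun A B n => zero (Pn n A) B).

Fixpoint Pn_pres {X Y : clac} (F : functor X Y) (n : nat) :
    forall A : ob X, fob F (Pn n A) = Pn n (fob F A) :=
  match n return forall A : ob X, fob F (Pn n A) = Pn n (fob F A) with
  | O => fun A => eq_refl
  | S m => fun A => eq_trans (Pn_pres F m (P A))
                     (f_equal (fun Z => Pn m Z) (fprod F A A))
  end.

Definition Dbar_fun {X Y : clac} (F : functor X Y) : functor (Dbar X) (Dbar Y) :=
  Functor (X := Dbar X) (Y := Dbar Y) (fob F)
    (fun A B f n => cast_src (Pn_pres F n A) (fhom F (f n)))
    (fprod F).

Definition eps (X : clac) : functor (Dbar X) X :=
  Functor (X := Dbar X) (Y := X) (fun A => A) (fun A B f => f 0) (fun A B => eq_refl).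

Definition delta (X : clac) : functor (Dbar X) (Dbar (Dbar X)) :=
  Functor (X := Dbar X) (Y := Dbar (Dbar X)) (fun A => A)
    (fun A B f n => Dn n f) (fun A B => eq_refl).

(* Main.v *)
Require Import Defs.
From Stdlib Require Import FunctionalExtensionality Eqdep.
From Corelib Require Import ssreflect.

Ltac fext := try unfold dseq; apply functional_extensionality_dep.

Section Base.
Variable X : clac.
Hypothesis HX : is_clac X.

Lemma comp_pair C D A B (h : @hom X C D) (a : hom D A) (b : hom D B) :
  comp h (pair a b) = pair (comp h a) (comp h b).
Proof.
  rewrite -(c_pair_uniq _ HX _ _ _ (comp h (pair a b))).
  rewrite !(c_assoc _ HX) (c_pair0 _ HX) (c_pair1 _ HX). reflexivity.
Qed.

Lemma comp_pairP C D A (h : @hom X C D) (a b : hom D A) :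
  @comp X C D (P A) h (pair a b) = pair (comp h a) (comp h b).
Proof. apply comp_pair. Qed.

Lemma comp_pmap C A B (a b : @hom X C A) (v : hom A B) :
  @comp X C (P A) (P B) (pair a b) (pmap X v) = pair (comp a v) (comp b v).
Proof.
  unfold pmap, P. rewrite comp_pair -!(c_assoc _ HX) (c_pair0 _ HX) (c_pair1 _ HX). reflexivity.
Qed.

Lemma pmap_comp A B C (u : @hom X A B) (v : hom B C) :
  pmap X (comp u v) = comp (pmap X u) (pmap X v).
Proof.
  unfold pmap, P. rewrite comp_pair -!(c_assoc _ HX) (c_pair0 _ HX) (c_pair1 _ HX).
  rewrite !(c_assoc _ HX). reflexivity.
Qed.

Lemma Pmap_comp n : forall A B C (u : @hom X A B) (v : hom B C),
  Pmap n (comp u v) = comp (Pmap n u) (Pmap n v).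
Proof.
  induction n; intros; simpl. reflexivity. rewrite pmap_comp. apply IHn.
Qed.

Lemma pmap_pi0 A B (u : @hom X A B) : @comp X (prod A A) (prod B B) B (pmap X u) (pi0 B B) = comp (pi0 A A) u.
Proof. unfold pmap. apply (c_pair0 _ HX). Qed.
Lemma pmap_pi1 A B (u : @hom X A B) : @comp X (prod A A) (prod B B) B (pmap X u) (pi1 B B) = comp (pi1 A A) u.
Proof. unfold pmap. apply (c_pair1 _ HX). Qed.

Lemma pi1s_nat k : forall A B (u : @hom X A B),
  comp (Pmap (S k) u) (pi1s X k B) = comp (pi1s X k A) u.
Proof.
  induction k; intros.
  - simpl. apply pmap_pi1.
  - change (comp (Pmap (S k) (pmap X u)) (comp (pi1s X k (P B)) (pi1 B B))
      = comp (comp (pi1s X k (P A)) (pi1 A A)) u).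
    rewrite -(c_assoc _ HX) IHk !(c_assoc _ HX). unfold P. rewrite pmap_pi1. reflexivity.
Qed.

Lemma Tseq_id A : Tseq X (idn X A) = idn X (P A).
Proof.
  fext; intros [|k]; unfold Tseq.
  - simpl. rewrite (c_idr _ HX). 
    pose proof (c_pair_uniq _ HX _ _ _ (idm (P A))) as E. rewrite !(c_idl _ HX) in E. exact E.
  - change (pair (comp (Pmap (S k) (pi0 A A)) (pi1s X k A)) (comp (pi1s X k (P A)) (pi1 A A))
       = pi1s X k (P A)).
    rewrite pi1s_nat. apply (c_pair_uniq _ HX).
Qed.

Lemma Tn_id n : forall A, Tn n (idn X A) = idn X (Pn n A).
Proof.
  induction n; intros. reflexivity.
  change (Tn n (Tseq X (idn X A)) = idn X (Pn n (P A))). rewrite Tseq_id. apply IHn.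
Qed.

Lemma RU' m : forall A B (f : dseq X A B), comp (Tn (S m) f 0) (pi1s X m B) = f (S m).
Proof.
  induction m; intros.
  - simpl. unfold Tseq. apply (c_pair1 _ HX).
  - change (comp (Tn (S m) (Tseq X f) 0) (comp (pi1s X m (P B)) (pi1 B B)) = f (S (S m))).
    rewrite -(c_assoc _ HX) IHm. unfold Tseq. apply (c_pair1 _ HX).
Qed.

Lemma RU n A B (f : dseq X A B) : comp (Tn n f 0) (idn X B n) = f n.
Proof. destruct n. apply (c_idr _ HX). apply RU'. Qed.

Definition lin {A B C} (h : dseq X A B) (k : @hom X B C) : dseq X A C := fun n => comp (h n) k.

Lemma dcomp_lin A B C (h : dseq X A B) (k : @hom X B C) :
  dcomp X h (lin (idn X B) k) = lin h k.
Proof.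
  fext; intro n. unfold dcomp, lin.
  rewrite -(c_assoc _ HX) RU. reflexivity.
Qed.

Lemma Nstep A A' B B' (g : dseq X A' B') (f : dseq X A B) u v :
  (forall k, comp (g k) v = comp (Pmap k u) (f k)) ->
  forall k, comp (Tseq X g k) (pmap X v) = comp (Pmap k (pmap X u)) (Tseq X f k).
Proof.
  intros H k. unfold Tseq. rewrite comp_pmap comp_pairP. f_equal.
  - rewrite (c_assoc _ HX) (H k) -!(c_assoc _ HX) -!Pmap_comp.
    unfold P. rewrite pmap_pi0. reflexivity.
  - apply (H (S k)).
Qed.

Lemma Tn_nat n : forall A A' B B' (g : dseq X A' B') (f : dseq X A B) u v,
  (forall k, comp (g k) v = comp (Pmap k u) (f k)) ->
  forall k, comp (Tn n g k) (Pmap n v) = comp (Pmap k (Pmap n u)) (Tn n f k).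
Proof.
  induction n; intros. exact (H k).
  exact (IHn _ _ _ _ (Tseq X g) (Tseq X f) (pmap X u) (pmap X v) (Nstep _ _ _ _ _ _ _ _ H) k).
Qed.

Lemma assoc_sq A1 A2 A3 A4 B (a : @hom X A1 A2) (b: hom A2 A3) (c: hom A1 A4) (d: hom A4 A3)
  (e : hom A3 B) : comp a b = comp c d -> comp c (comp d e) = comp a (comp b e).
Proof. intro H. rewrite -!(c_assoc _ HX) H. reflexivity. Qed.

Lemma Tseq_comp A B C (f : dseq X A B) (g : dseq X B C) :
  Tseq X (dcomp X f g) = dcomp X (Tseq X f) (Tseq X g).
Proof.
  fext; intro n.
  change (pair (comp (Pmap n (pi0 A A)) (comp (Tn n f 0) (g n))) (comp (Tn n (Tseq X f) 0) (g (S n)))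
    = comp (Tn n (Tseq X f) 0) (pair (comp (Pmap n (pi0 B B)) (g n)) (g (S n)) : hom _ (P C))).
  rewrite comp_pairP. f_equal.
  - apply assoc_sq.
    assert (H0 : forall k, comp (Tseq X f k) (pi0 B B) = comp (Pmap k (pi0 A A)) (f k)).
    { intro k. unfold Tseq. apply (c_pair0 _ HX). }
    exact (Tn_nat n _ _ _ _ (Tseq X f) f (pi0 A A) (pi0 B B) H0 0).
Qed.

Lemma Tn_comp n : forall A B C (f : dseq X A B) (g : dseq X B C),
  Tn n (dcomp X f g) = dcomp X (Tn n f) (Tn n g).
Proof.
  induction n; intros. reflexivity.
  change (Tn n (Tseq X (dcomp X f g)) = dcomp X (Tn n (Tseq X f)) (Tn n (Tseq X g))).
  rewrite Tseq_comp. apply IHn.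
Qed.


Lemma Dbar_clac : is_clac (Dbar X).
Proof.
  constructor.
  - intros A B f. fext. intro n.
    change (comp (Tn n (idn X A) 0) (f n) = f n). rewrite Tn_id. apply (c_idl _ HX).
  - intros A B f. fext. intro n. apply RU.
  - intros A B C D f g h. fext. intro n.
    change (comp (Tn n (dcomp X f g) 0) (h n) = comp (Tn n f 0) (comp (Tn n g 0) (h n))).
    rewrite Tn_comp. apply (c_assoc _ HX).
  - intros C A B f g.
    change (dcomp X (fun n => pair (f n) (g n)) (lin (idn X (@prod X A B)) (@pi0 X A B)) = f).
    rewrite dcomp_lin. fext; intro n; apply (c_pair0 _ HX).
  - intros C A B f g.
    change (dcomp X (fun n => pair (f n) (g n)) (lin (idn X (@prod X A B)) (@pi1 X A B)) = g).
    rewrite dcomp_lin. fext; intro n; apply (c_pair1 _ HX).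
  - intros C A B h.
    change ((fun n => pair (dcomp X h (lin (idn X (@prod X A B)) (@pi0 X A B)) n)
       (dcomp X h (lin (idn X (@prod X A B)) (@pi1 X A B)) n)) = h).
    rewrite !dcomp_lin. fext; intro n; apply (c_pair_uniq _ HX).
  - intros A f. fext; intro n; apply (c_term_uniq _ HX).
  - intros. fext; intro n; apply (c_addA _ HX).
  - intros. fext; intro n; apply (c_addC _ HX).
  - intros. fext; intro n; apply (c_add0 _ HX).
  - intros. fext; intro n; apply (c_compD _ HX).
  - intros. fext; intro n; apply (c_comp0 _ HX).
  - intros C A B f g.
    change (dcomp X (fun n => add (f n) (g n)) (lin (idn X (@prod X A B)) (@pi0 X A B)) =
      (fun n => add (dcomp X f (lin (idn X (@prod X A B)) (@pi0 X A B)) n) (dcomp X g (lin (idn X (@prod X A B)) (@pi0 X A B)) n))).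
    rewrite !dcomp_lin. fext; intro n; apply (c_pi0D _ HX).
  - intros C A B f g.
    change (dcomp X (fun n => add (f n) (g n)) (lin (idn X (@prod X A B)) (@pi1 X A B)) =
      (fun n => add (dcomp X f (lin (idn X (@prod X A B)) (@pi1 X A B)) n) (dcomp X g (lin (idn X (@prod X A B)) (@pi1 X A B)) n))).
    rewrite !dcomp_lin. fext; intro n; apply (c_pi1D _ HX).
  - intros C A B.
    change (dcomp X (fun n => @zero X (Pn n C) (@prod X A B)) (lin (idn X (@prod X A B)) (@pi0 X A B)) = (fun n => @zero X (Pn n C) A)).
    rewrite !dcomp_lin. fext; intro n; apply (c_pi00 _ HX).
  - intros C A B.
    change (dcomp X (fun n => @zero X (Pn n C) (@prod X A B)) (lin (idn X (@prod X A B)) (@pi1 X A B)) = (fun n => @zero X (Pn n C) B)).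
    rewrite !dcomp_lin. fext; intro n; apply (c_pi10 _ HX).
Qed.


Lemma Dn_pair n : forall A B C (a : dseq X A B) (b : dseq X A C),
  Dn n (fun k => pair (a k) (b k)) = fun k => pair (Dn n a k) (Dn n b k).
Proof. induction n; intros. reflexivity. exact (IHn _ _ _ (Dseq X a) (Dseq X b)). Qed.

Lemma Dn_comp n : forall A B C (f : dseq X A B) (g : dseq X B C),
  Dn n (dcomp X f g) = dcomp X (Tn n f) (Dn n g).
Proof. induction n; intros. reflexivity. exact (IHn _ _ _ (Tseq X f) (Dseq X g)). Qed.

Lemma Dn_lin n : forall A B C (h : dseq X A B) (k : @hom X B C),
  Dn n (lin h k) = lin (Dn n h) k.
Proof. induction n; intros. reflexivity. exact (IHn _ _ _ (Dseq X h) k). Qed.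

Lemma Dn_add n : forall A B (f g : dseq X A B),
  Dn n (fun k => add (f k) (g k)) = fun k => add (Dn n f k) (Dn n g k).
Proof. induction n; intros. reflexivity. exact (IHn _ _ (Dseq X f) (Dseq X g)). Qed.

Lemma Dn_zero n : forall A B,
  Dn n (fun k => @zero X (Pn k A) B) = fun k => zero (Pn k (Pn n A)) B.
Proof. induction n; intros. reflexivity. exact (IHn (P A) B). Qed.

Lemma Dn_0 n : forall A B (f : dseq X A B), Dn n f 0 = f n.
Proof. induction n; intros. reflexivity. exact (IHn _ _ (Dseq X f)). Qed.

Lemma Tseq_lin A B C (h : dseq X A B) (k : @hom X B C) :
  Tseq X (lin h k) = lin (Tseq X h) (pmap X k).
Proof.
  fext; intro n. unfold Tseq, lin. rewrite comp_pmap !(c_assoc _ HX). reflexivity.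
Qed.

Lemma Tn_lin n : forall A B (k : @hom X A B),
  Tn n (lin (idn X A) k) = lin (idn X (Pn n A)) (Pmap n k).
Proof.
  induction n; intros. reflexivity.
  change (Tn n (Tseq X (lin (idn X A) k)) = lin (idn X (Pn n (P A))) (Pmap n (pmap X k))).
  rewrite Tseq_lin Tseq_id. apply IHn.
Qed.

Lemma pmapD_lin A B (k : @hom X A B) :
  pmap (Dbar X) (lin (idn X A) k) = lin (idn X (P A)) (pmap X k).
Proof.
  change ((fun n => pair (dcomp X (lin (idn X (@prod X A A)) (@pi0 X A A)) (lin (idn X A) k) n)
                         (dcomp X (lin (idn X (@prod X A A)) (@pi1 X A A)) (lin (idn X A) k) n))
          = lin (idn X (P A)) (pmap X k)).
  rewrite !dcomp_lin. fext; intro n. unfold lin, pmap, P.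
  rewrite comp_pair !(c_assoc _ HX). reflexivity.
Qed.

Lemma PmapD_lin n : forall A B (k : @hom X A B),
  Pmap (X := Dbar X) n (lin (idn X A) k) = lin (idn X (Pn n A)) (Pmap n k).
Proof.
  induction n; intros. reflexivity.
  change (Pmap (X := Dbar X) n (pmap (Dbar X) (lin (idn X A) k)) = lin (idn X (Pn n (P A))) (Pmap n (pmap X k))).
  rewrite pmapD_lin. apply IHn.
Qed.

Lemma Tseq_pairD A B (f : dseq X A B) :
  Tseq X f = fun n => pair (dcomp X (lin (idn X (@prod X A A)) (@pi0 X A A)) f n) (Dseq X f n).
Proof.
  fext; intro n. unfold dcomp. rewrite Tn_lin. unfold lin, Tseq, Dseq. f_equal.
  simpl. rewrite (c_idl _ HX). reflexivity.
Qed.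

Lemma Tseq_delta A B (f : dseq X A B) :
  Tseq (Dbar X) (fun n => Dn n f) = fun n => Dn n (Tseq X f).
Proof.
  fext; intro n. rewrite Tseq_pairD. rewrite Dn_pair Dn_comp Tn_lin.
  change ((fun k => pair (dcomp X (Pmap (X := Dbar X) n (lin (idn X (@prod X A A)) (@pi0 X A A))) (Dn n f) k) (Dn (S n) f k))
    = (fun k => pair (dcomp X (lin (idn X (Pn n (P A))) (Pmap n (pi0 A A))) (Dn n f) k) (Dn n (Dseq X f) k))).
  rewrite PmapD_lin. reflexivity.
Qed.

Lemma Tn_delta n : forall A B (f : dseq X A B),
  Tn (X := Dbar X) n (fun m => Dn m f) = fun m => Dn m (Tn n f).
Proof.
  induction n; intros. reflexivity.
  change (Tn (X := Dbar X) n (Tseq (Dbar X) (fun m => Dn m f)) = fun m => Dn m (Tn n (Tseq X f))).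
  rewrite Tseq_delta. apply IHn.
Qed.

Lemma Dseq_id A : Dseq X (idn X A) = lin (idn X (P A)) (pi1 A A).
Proof.
  fext; intros [|k]; unfold lin, Dseq.
  - simpl. rewrite (c_idl _ HX). reflexivity.
  - reflexivity.
Qed.

Lemma Dn_id m : forall A, Dn m (idn X A) = idn (Dbar X) A m.
Proof.
  induction m; intros. reflexivity.
  change (Dn m (Dseq X (idn X A)) = idn (Dbar X) A (S m)).
  rewrite Dseq_id Dn_lin IHm. destruct m.
  - reflexivity.
  - change (lin (pi1s (Dbar X) m (P A)) (pi1 A A) =
            dcomp X (pi1s (Dbar X) m (P A)) (lin (idn X (@prod X A A)) (@pi1 X A A))).
    rewrite dcomp_lin. reflexivity.
Qed.

Lemma delta_functor : is_clac_functor (delta X).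
Proof.
  constructor.
  - intros A. change ((fun n => Dn n (idn X A)) = idn (Dbar X) A). fext; intro n. apply Dn_id.
  - intros A B C f g.
    change ((fun n => Dn n (dcomp X f g)) = dcomp (Dbar X) (fun n => Dn n f) (fun n => Dn n g)).
    fext; intro n. rewrite Dn_comp.
    change (dcomp X (Tn n f) (Dn n g) = dcomp X (Tn (X := Dbar X) n (fun n => Dn n f) 0) (Dn n g)).
    rewrite Tn_delta. reflexivity.
  - reflexivity.
  - intros A B.
    change ((fun n => Dn n (lin (idn X (@prod X A B)) (@pi0 X A B))) =
       fun n => dcomp X (idn (Dbar X) (@prod X A B) n) (lin (idn X (@prod X A B)) (@pi0 X A B))).
    fext; intro n. rewrite Dn_lin dcomp_lin Dn_id. reflexivity.
  - intros A B.
    change ((fun n => Dn n (lin (idn X (@prod X A B)) (@pi1 X A B))) =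
       fun n => dcomp X (idn (Dbar X) (@prod X A B) n) (lin (idn X (@prod X A B)) (@pi1 X A B))).
    fext; intro n. rewrite Dn_lin dcomp_lin Dn_id. reflexivity.
  - intros A B f g. fext; intro n. apply Dn_add.
  - intros A B. fext; intro n. apply Dn_zero.
Qed.

Lemma eps_functor : is_clac_functor (eps X).
Proof.
  constructor.
  - reflexivity.
  - reflexivity.
  - reflexivity.
  - intros A B. apply (c_idl _ HX).
  - intros A B. apply (c_idl _ HX).
  - reflexivity.
  - reflexivity.
Qed.

End Base.

Definition Hq {X : clac} {A B A' B' : ob X} (f : @hom X A B) (g : @hom X A' B') : Prop :=
  existT (fun p : ob X * ob X => @hom X (fst p) (snd p)) (A, B) f =
  existT (fun p : ob X * ob X => @hom X (fst p) (snd p)) (A', B') g.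

Lemma Hq_obj {X : clac} {A B A' B' : ob X} (f : @hom X A B) (g : @hom X A' B') :
  Hq f g -> A = A' /\ B = B'.
Proof. intro H. apply (f_equal (@projT1 _ _)) in H. simpl in H. injection H. auto. Qed.

Lemma Hq_eq {X : clac} {A B : ob X} (f g : @hom X A B) : Hq f g -> f = g.
Proof. intro H. exact (inj_pair2 _ _ _ _ _ H). Qed.

Ltac hq H := let e1 := fresh "e" in let e2 := fresh "e" in
  destruct (Hq_obj _ _ H) as [e1 e2]; subst; apply Hq_eq in H; subst.

Section HqS.
Context {X : clac}.

Lemma Hq_refl {A B : ob X} (f : hom A B) : Hq f f.
Proof. reflexivity. Qed.
Lemma Hq_sym {A B A' B' : ob X} (f : hom A B) (g : hom A' B') : Hq f g -> Hq g f.
Proof. unfold Hq. intro H. symmetry. exact H. Qed.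
Lemma Hq_trans {A B A' B' A'' B'' : ob X} (f : hom A B) (g : hom A' B') (h : hom A'' B'') :
  Hq f g -> Hq g h -> Hq f h.
Proof. unfold Hq. intros H1 H2. exact (eq_trans H1 H2). Qed.
Lemma Hq_cast_src {A A' B : ob X} (e : A = A') (f : hom A B) : Hq (cast_src e f) f.
Proof. destruct e. reflexivity. Qed.
Lemma Hq_cast2 {A A' B B' : ob X} (e1 : A = A') (e2 : B = B') (f : hom A B) : Hq (cast2 e1 e2 f) f.
Proof. destruct e1, e2. reflexivity. Qed.
Lemma Hq_cast2_eq {A A' B B' : ob X} (e1 : A = A') (e2 : B = B') (f : hom A B) (g : hom A' B') :
  Hq f g -> cast2 e1 e2 f = g.
Proof. destruct e1, e2. apply Hq_eq. Qed.
Lemma Hq_cast_src_eq {A A' B : ob X} (e : A = A') (f : hom A B) (g : hom A' B) :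
  Hq f g -> cast_src e f = g.
Proof. apply (Hq_cast2_eq e eq_refl). Qed.
Lemma Hq_comp {A B C A' B' C' : ob X} (f : hom A B) (g : hom B C) (f' : hom A' B') (g' : hom B' C') :
  Hq f f' -> Hq g g' -> Hq (comp f g) (comp f' g').
Proof. intros H1 H2. hq H1. hq H2. reflexivity. Qed.
Lemma Hq_pair {C A B C' A' B' : ob X} (f : hom C A) (g : hom C B) (f' : hom C' A') (g' : hom C' B') :
  Hq f f' -> Hq g g' -> Hq (pair f g) (pair f' g').
Proof. intros H1 H2. hq H1. hq H2. reflexivity. Qed.
Lemma Hq_add {A B A' B' : ob X} (f g : hom A B) (f' g' : hom A' B') :
  Hq f f' -> Hq g g' -> Hq (add f g) (add f' g').
Proof. intros H1 H2. hq H1. hq H2. reflexivity. Qed.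
Lemma Hq_zero {A B A' B' : ob X} : A = A' -> B = B' -> Hq (zero A B) (zero A' B').
Proof. intros; subst; reflexivity. Qed.
Lemma Hq_pi0 {A B A' B' : ob X} : A = A' -> B = B' -> Hq (pi0 A B) (pi0 A' B').
Proof. intros; subst; reflexivity. Qed.
Lemma Hq_pi1 {A B A' B' : ob X} : A = A' -> B = B' -> Hq (pi1 A B) (pi1 A' B').
Proof. intros; subst; reflexivity. Qed.
Lemma Hq_pi1s n {A A' : ob X} : A = A' -> Hq (pi1s X n A) (pi1s X n A').
Proof. intros; subst; reflexivity. Qed.
Lemma Hq_idn n {A A' : ob X} : A = A' -> Hq (idn X A n) (idn X A' n).
Proof. intros; subst; reflexivity. Qed.
Lemma Hq_Pmap n {A B A' B' : ob X} (u : hom A B) (u' : hom A' B') :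
  Hq u u' -> Hq (Pmap n u) (Pmap n u').
Proof. intro H. hq H. reflexivity. Qed.

Lemma HqD_pt {A B A' B' : ob X} (f : dseq X A B) (g : dseq X A' B') :
  @Hq (Dbar X) A B A' B' f g -> forall m, Hq (f m) (g m).
Proof. intros H m. hq H. reflexivity. Qed.
Lemma HqD_of {A B A' B' : ob X} (f : dseq X A B) (g : dseq X A' B') :
  A = A' -> B = B' -> (forall m, Hq (f m) (g m)) -> @Hq (Dbar X) A B A' B' f g.
Proof.
  intros e1 e2 H. subst. assert (f = g) as ->. { fext. intro m. apply Hq_eq. apply H. }
  reflexivity.
Qed.
Lemma Hq_Tn n {A B A' B' : ob X} (f : dseq X A B) (g : dseq X A' B') :
  @Hq (Dbar X) A B A' B' f g -> @Hq (Dbar X) (Pn n A) (Pn n B) (Pn n A') (Pn n B') (Tn n f) (Tn n g).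
Proof. intro H. hq H. reflexivity. Qed.
Lemma Hq_Dn n {A B A' B' : ob X} (f : dseq X A B) (g : dseq X A' B') :
  @Hq (Dbar X) A B A' B' f g -> @Hq (Dbar X) (Pn n A) B (Pn n A') B' (Dn n f) (Dn n g).
Proof. intro H. hq H. reflexivity. Qed.
End HqS.

Lemma Hq_fhom {X Y : clac} (F : functor X Y) {A B A' B' : ob X} (f : @hom X A B) (g : hom A' B') :
  Hq f g -> Hq (fhom F f) (fhom F g).
Proof. intro H. hq H. reflexivity. Qed.

Section Fun.
Context {X Y : clac} (HX : is_clac X) (HY : is_clac Y) (F : functor X Y) (HF : is_clac_functor F).

Notation Ft := (fhom (Dbar_fun F)).

Lemma F_pi0 A B : Hq (fhom F (pi0 A B)) (pi0 (fob F A) (fob F B)).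
Proof. rewrite -(f_pi0 _ HF A B). apply Hq_sym, Hq_cast_src. Qed.
Lemma F_pi1 A B : Hq (fhom F (pi1 A B)) (pi1 (fob F A) (fob F B)).
Proof. rewrite -(f_pi1 _ HF A B). apply Hq_sym, Hq_cast_src. Qed.

Lemma F_pair C A B (f : @hom X C A) (g : hom C B) :
  Hq (fhom F (pair f g)) (pair (fhom F f) (fhom F g)).
Proof.
  set h := cast2 eq_refl (fprod F A B) (fhom F (pair f g)).
  have Hh : Hq h (fhom F (pair f g)) by apply Hq_cast2.
  have E0 : comp h (pi0 (fob F A) (fob F B)) = fhom F f.
  { apply Hq_eq. eapply Hq_trans. eapply Hq_comp. exact Hh. apply Hq_sym, F_pi0.
    rewrite -(f_comp _ HF) (c_pair0 _ HX). apply Hq_refl. }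
  have E1 : comp h (pi1 (fob F A) (fob F B)) = fhom F g.
  { apply Hq_eq. eapply Hq_trans. eapply Hq_comp. exact Hh. apply Hq_sym, F_pi1.
    rewrite -(f_comp _ HF) (c_pair1 _ HX). apply Hq_refl. }
  eapply Hq_trans. apply Hq_sym, Hh.
  rewrite -(c_pair_uniq _ HY _ _ _ h) E0 E1. apply Hq_refl.
Qed.

Lemma F_pmap A B (u : @hom X A B) : Hq (fhom F (pmap X u)) (pmap Y (fhom F u)).
Proof.
  unfold pmap at 1. eapply Hq_trans. apply F_pair. eapply Hq_pair.
  - rewrite (f_comp _ HF). eapply Hq_comp. apply F_pi0. apply Hq_refl.
  - rewrite (f_comp _ HF). eapply Hq_comp. apply F_pi1. apply Hq_refl.
Qed.

Lemma F_Pmap n : forall A B (u : @hom X A B), Hq (fhom F (Pmap n u)) (Pmap n (fhom F u)).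
Proof.
  induction n; intros. apply Hq_refl.
  change (Hq (fhom F (Pmap n (pmap X u))) (Pmap n (pmap Y (fhom F u)))).
  eapply Hq_trans. apply IHn. apply Hq_Pmap, F_pmap.
Qed.

Lemma F_pi1s k : forall A, Hq (fhom F (pi1s X k A)) (pi1s Y k (fob F A)).
Proof.
  induction k; intros. apply F_pi1.
  change (Hq (fhom F (comp (pi1s X k (P A)) (pi1 A A))) (comp (pi1s Y k (P (fob F A))) (pi1 (fob F A) (fob F A)))).
  rewrite (f_comp _ HF). eapply Hq_comp.
  - eapply Hq_trans. apply IHk. apply Hq_pi1s. apply (fprod F).
  - apply F_pi1.
Qed.

Lemma F_idn n A : Hq (fhom F (idn X A n)) (idn Y (fob F A) n).
Proof.
  destruct n. simpl. rewrite (f_id _ HF). apply Hq_refl. apply F_pi1s.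
Qed.

Lemma Ft_pt A B (f : dseq X A B) m : Hq (Ft f m) (fhom F (f m)).
Proof. apply Hq_cast_src. Qed.

Lemma FT_seq A B (f : dseq X A B) :
  @Hq (Dbar Y) _ _ _ _ (Ft (Tseq X f)) (Tseq Y (Ft f)).
Proof.
  apply HqD_of. apply (fprod F). apply (fprod F). intro m.
  eapply Hq_trans. apply Ft_pt. unfold Tseq at 1. eapply Hq_trans. apply F_pair.
  unfold Tseq. eapply Hq_pair.
  - rewrite (f_comp _ HF). eapply Hq_comp.
    + eapply Hq_trans. apply F_Pmap. apply Hq_Pmap, F_pi0.
    + apply Hq_sym, (Ft_pt _ _ f m).
  - apply Hq_sym, (Ft_pt _ _ f (S m)).
Qed.

Lemma FT_n n : forall A B (f : dseq X A B),
  @Hq (Dbar Y) _ _ _ _ (Ft (Tn n f)) (Tn n (Ft f)).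
Proof.
  induction n; intros. apply Hq_refl.
  change (@Hq (Dbar Y) _ _ _ _ (Ft (Tn n (Tseq X f))) (Tn n (Tseq Y (Ft f)))).
  eapply Hq_trans. apply IHn. apply Hq_Tn, FT_seq.
Qed.

Lemma Dbar_fun_functor : is_clac_functor (Dbar_fun F).
Proof.
  constructor.
  - intros A. fext; intro m. apply Hq_cast_src_eq. apply F_idn.
  - intros A B C f g. fext; intro m. apply Hq_cast_src_eq.
    change (Hq (fhom F (comp (Tn m f 0) (g m))) (comp (Tn m (Ft f) 0) (Ft g m))).
    rewrite (f_comp _ HF). eapply Hq_comp.
    + eapply Hq_trans. apply Hq_sym, (Ft_pt _ _ (Tn m f) 0). apply (HqD_pt _ _ (FT_n m A B f) 0).
    + apply Hq_sym, Ft_pt.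
  - apply (f_term _ HF).
  - intros A B. apply Hq_cast_src_eq. apply HqD_of. apply (fprod F). reflexivity. intro m.
    eapply Hq_trans. apply Ft_pt. rewrite (f_comp _ HF). eapply Hq_comp.
    + eapply Hq_trans. apply F_idn. apply Hq_idn, (fprod F).
    + apply F_pi0.
  - intros A B. apply Hq_cast_src_eq. apply HqD_of. apply (fprod F). reflexivity. intro m.
    eapply Hq_trans. apply Ft_pt. rewrite (f_comp _ HF). eapply Hq_comp.
    + eapply Hq_trans. apply F_idn. apply Hq_idn, (fprod F).
    + apply F_pi1.
  - intros A B f g. fext; intro m. apply Hq_cast_src_eq.
    rewrite (f_add _ HF). eapply Hq_add; apply Hq_sym, Ft_pt.
  - intros A B. fext; intro m. apply Hq_cast_src_eq.
    rewrite (f_zero _ HF). apply Hq_zero. apply (Pn_pres F). reflexivity.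
Qed.

Lemma FD_seq A B (f : dseq X A B) :
  @Hq (Dbar Y) _ _ _ _ (Dseq Y (Ft f)) (Ft (Dseq X f)).
Proof.
  apply HqD_of. symmetry; apply (fprod F). reflexivity. intro m.
  change (Hq (Ft f (S m)) (Ft (Dseq X f) m)).
  eapply Hq_trans. apply (Ft_pt _ _ f (S m)). apply Hq_sym, (Ft_pt _ _ (Dseq X f) m).
Qed.

Lemma FD_n n : forall A B (f : dseq X A B),
  @Hq (Dbar Y) _ _ _ _ (Dn n (Ft f)) (Ft (Dn n f)).
Proof.
  induction n; intros. apply Hq_refl.
  change (@Hq (Dbar Y) _ _ _ _ (Dn n (Dseq Y (Ft f))) (Ft (Dn n (Dseq X f)))).
  eapply Hq_trans. apply Hq_Dn, FD_seq. apply IHn.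
Qed.

End Fun.

Lemma Dn_delta (X : clac) n : forall A B (f : dseq X A B),
  Dn (X := Dbar X) n (fun m => Dn m f) = fun m => Dn m (Dn n f).
Proof. induction n; intros. reflexivity. exact (IHn _ _ (Dseq X f)). Qed.

Theorem proposition3p25 :
  (forall X : clac, is_clac X -> is_clac (Dbar X)) /\
  (forall (X Y : clac) (F : functor X Y),
      is_clac X -> is_clac Y -> is_clac_functor F -> is_clac_functor (Dbar_fun F)) /\
  (forall X : clac, is_clac X -> fun_eq (Dbar_fun (fid X)) (fid (Dbar X))) /\
  (forall (X Y Z : clac) (F : functor X Y) (G : functor Y Z),
      is_clac X -> is_clac Y -> is_clac Z ->
      is_clac_functor F -> is_clac_functor G ->
      fun_eq (Dbar_fun (fcomp F G)) (fcomp (Dbar_fun F) (Dbar_fun G))) /\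
  (forall X : clac, is_clac X -> is_clac_functor (eps X)) /\
  (forall X : clac, is_clac X -> is_clac_functor (delta X)) /\
  (forall (X Y : clac) (F : functor X Y),
      is_clac X -> is_clac Y -> is_clac_functor F ->
      fun_eq (fcomp (Dbar_fun F) (eps Y)) (fcomp (eps X) F)) /\
  (forall (X Y : clac) (F : functor X Y),
      is_clac X -> is_clac Y -> is_clac_functor F ->
      fun_eq (fcomp (Dbar_fun F) (delta Y)) (fcomp (delta X) (Dbar_fun (Dbar_fun F)))) /\
  (forall X : clac, is_clac X ->
      fun_eq (fcomp (delta X) (eps (Dbar X))) (fid (Dbar X))) /\
  (forall X : clac, is_clac X ->
      fun_eq (fcomp (delta X) (Dbar_fun (eps X))) (fid (Dbar X))) /\
  (forall X : clac, is_clac X ->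
      fun_eq (fcomp (delta X) (delta (Dbar X)))
             (fcomp (delta X) (Dbar_fun (delta X)))).
Proof.
  split; [| split; [| split; [| split; [| split; [| split; [| split; [| split; [| split; [| split]]]]]]]]].
  - exact Dbar_clac.
  - intros X Y F HX HY HF. exact (Dbar_fun_functor HX HY F HF).
  - intros X HX. exists (fun A => eq_refl). intros A B f. simpl.
    fext; intro n. apply Hq_cast_src_eq. apply Hq_refl.
  - intros X Y Z F G HX HY HZ HF HG. exists (fun A => eq_refl). intros A B f. simpl.
    fext; intro n. apply Hq_cast_src_eq.
    eapply Hq_trans. 2: apply Hq_sym, Hq_cast_src. apply Hq_fhom. apply Hq_sym, Hq_cast_src.
  - exact eps_functor.
  - exact delta_functor.
  - intros X Y F HX HY HF. exists (fun A => eq_refl). intros A B f. reflexivity.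
  - intros X Y F HX HY HF. exists (fun A => eq_refl). intros A B f. simpl.
    fext; intro n. symmetry. refine (@Hq_cast_src_eq (Dbar Y) _ _ _ _ _ _ _). apply Hq_sym. exact (FD_n F n A B f).
  - intros X HX. exists (fun A => eq_refl). intros A B f. reflexivity.
  - intros X HX. exists (fun A => eq_refl). intros A B f. simpl.
    fext; intro n. apply Hq_cast_src_eq. rewrite Dn_0. apply Hq_refl.
  - intros X HX. exists (fun A => eq_refl). intros A B f. simpl.
    fext; intro n. symmetry. apply Hq_cast_src_eq. rewrite Dn_delta. apply Hq_refl.
Qed.
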